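(* Fix $a\ge0$ and $0\le\alpha\le\beta$. There is a constant $M_a^{\alpha,\beta}>0$, independent of $n$, $x$ and $f$, such that for every $f\in C_\rho^k[0,\infty)$ and every integer $n\ge1$, $$\sup_{x\ge0}\frac{|T_{n,a}^{\alpha,\beta}(f;x)-f(x)|}{(1+x^2)^3}\le M_a^{\alpha,\beta}\,\Omega\!\left(f;(n+\beta)^{-1/2}\right).$$
   Context: Fix $a\ge 0$ and real numbers $\alpha,\beta$ with $0\le\alpha\le\beta$. For $n\in\mathbb N=\{1,2,\dots\}$ let $(n)_0=1$, $(n)_i=n(n+1)\cdots(n+i-1)$, and $p_k(n,a)=\sum_{i=0}^{k}\binom{k}{i}(n)_i a^{k-i}$. For $x\ge0$ and $k=0,1,2,\dots$ put $W_{n,k}^a(x)=e^{-\frac{ax}{1+x}}\frac{p_k(n,a)}{k!}\frac{x^k}{(1+x)^{k+n}}$ (so that $\sum_{k\ge0}W_{n,k}^a(x)=1$). The generalized Baskakov–Kantorovich–Stancu operator is $T_{n,a}^{\alpha,\beta}(f;x)=(n+\beta)\sum_{k=0}^{\infty}W_{n,k}^a(x)\int_{\frac{k+\alpha}{n+\beta}}^{\frac{k+\alpha+1}{n+\beta}}f(t)\,dt$. With the weight $\rho(x)=1+x^2$: $C_\rho[0,\infty)$ is the set of continuous $f$ on $[0,\infty)$ with $|f(x)|\le M_f\rho(x)$ for some constant $M_f$, and $C_\rho^k[0,\infty)$ is the set of $f\in C_\rho[0,\infty)$ for which $\lim_{x\to\infty}f(x)/\rho(x)$ exists and is finite. The weighted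 modulus of continuity (Ispir) is, for $\delta>0$, $\Omega(f;\delta)=\sup\left\{\frac{|f(x+h)-f(x)|}{(1+h^2)(1+x^2)}: x\ge0,\ |h|\le\delta,\ x+h\ge0\right\}$. *)

(* Defs.v *)
From Stdlib Require Import Reals Lra Lia ClassicalEpsilon Arith Factorial Binomial.
Open Scope R_scope.

Fixpoint poch (x : R) (i : nat) : R :=
  match i with
  | O => 1
  | S j => poch x j * (x + INR j)
  end.

Definition pk (k n : nat) (a : R) : R :=
  sum_f_R0 (fun i => C k i * poch (INR n) i * a ^ (k - i)) k.

Definition W (n k : nat) (a x : R) : R :=
  exp (- (a * x / (1 + x))) * (pk k n a / INR (fact k))
  * (x ^ k / (1 + x) ^ (k + n)).

(* Riemann integral of f on [lo,hi] (the value of RiemannInt for any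
   integrability proof; chosen by epsilon, meaningful when f is integrable). *)
Definition Rint (f : R -> R) (lo hi : R) : R :=
  epsilon (inhabits 0)
    (fun I => exists pr : Riemann_integrable f lo hi, RiemannInt pr = I).

Definition series_sum (u : nat -> R) : R :=
  epsilon (inhabits 0) (fun l => infinite_sum u l).

Definition T (n : nat) (a alpha beta : R) (f : R -> R) (x : R) : R :=
  (INR n + beta) *
  series_sum (fun k =>
    W n k a x *
    Rint f ((INR k + alpha) / (INR n + beta))
           ((INR k + alpha + 1) / (INR n + beta))).

Definition rho (x : R) : R := 1 + x ^ 2.

Definition cont_on_nonneg (f : R -> R) : Prop :=
  forall x, 0 <= x -> limit1_in f (fun y => 0 <= y) (f x) x.

Definition C_rho (f : R -> R) : Prop :=
  cont_on_nonneg f /\ exists Mf, forall x, 0 <= x -> Rabs (f x) <= Mf * rho x.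

Definition C_rho_k (f : R -> R) : Prop :=
  C_rho f /\ exists L, forall eps, eps > 0 ->
    exists A, forall x, x >= A -> 0 <= x -> Rabs (f x / rho x - L) < eps.

Definition Omega_set (f : R -> R) (delta : R) (r : R) : Prop :=
  exists x h, 0 <= x /\ Rabs h <= delta /\ 0 <= x + h /\
    r = Rabs (f (x + h) - f x) / ((1 + h ^ 2) * (1 + x ^ 2)).

Definition Omega (f : R -> R) (delta : R) : R :=
  epsilon (inhabits 0) (fun s => is_lub (Omega_set f delta) s).

(* Main.v *)
Require Import Defs.
From Stdlib Require Import Reals Lra Lia ZArith Factorial Binomial ClassicalEpsilon.
From Coquelicot Require Import Coquelicot.
Open Scope R_scope.

Lemma isR_scal (c : R) (a : nat -> R) (l : R) :
  is_series a l -> is_series (fun n => c * a n) (c * l).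
Proof. intro H. exact (is_series_scal_l c a l H). Qed.

Lemma isR_ext (a b : nat -> R) (l : R) :
  (forall n, a n = b n) -> is_series a l -> is_series b l.
Proof. intros H1 H2. exact (is_series_ext a b l H1 H2). Qed.

Lemma isR_l (a : nat -> R) (l l' : R) :
  l = l' -> is_series a l -> is_series a l'.
Proof. intros ->; auto. Qed.

Lemma isR_plus (a b : nat -> R) (la lb : R) :
  is_series a la -> is_series b lb -> is_series (fun n => a n + b n) (la + lb).
Proof. intros H1 H2. exact (is_series_plus a b la lb H1 H2). Qed.

Lemma isR_decr (a : nat -> R) (l : R) :
  a 0%nat = 0 -> is_series (fun k => a (S k)) l -> is_series a l.
Proof.
  intros H0 H. apply is_series_decr_1.
  change (plus l (opp (a 0%nat))) with (Rplus l (Ropp (a 0%nat))).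
  rewrite H0, Ropp_0, Rplus_0_r. exact H.
Qed.

Lemma ex_abs_nonneg (a : nat -> R) (l : R) :
  (forall n, 0 <= a n) -> is_series a l -> ex_series (fun n => Rabs (a n)).
Proof.
  intros Hp H. apply ex_series_ext with a.
  intro n; rewrite Rabs_pos_eq; auto.
  exists l; exact H.
Qed.

Lemma poch_S x i : poch x (S i) = x * poch (x + 1) i.
Proof.
  induction i as [|i IH].
  - simpl. ring.
  - change (poch x (S (S i))) with (poch x (S i) * (x + INR (S i))).
    rewrite IH. simpl poch. rewrite S_INR. ring.
Qed.

Lemma poch1 i : poch 1 i = INR (fact i).
Proof.
  induction i as [|i IH].
  - simpl. reflexivity.
  - simpl poch. rewrite IH. change (fact (S i)) with (S i * fact i)%nat.
    rewrite mult_INR, S_INR. ring.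
Qed.

Lemma fact_pos' i : 0 < INR (fact i).
Proof. apply lt_0_INR. apply lt_O_fact. Qed.

Ltac nz := repeat split; try apply Rgt_not_eq; try apply fact_pos'; try apply pow_lt; try lra.

Lemma hockey m i :
  poch (INR (S m)) i / INR (fact i) =
  sum_f_R0 (fun j => poch (INR m) j / INR (fact j)) i.
Proof.
  induction i as [|i IH].
  - simpl. field.
  - rewrite tech5. rewrite <- IH.
    rewrite (poch_S (INR m) i). rewrite <- S_INR.
    change (poch (INR (S m)) (S i)) with (poch (INR (S m)) i * (INR (S m) + INR i)).
    change (fact (S i)) with (S i * fact i)%nat.
    rewrite mult_INR. rewrite !S_INR.
    pose proof (fact_pos' i). pose proof (pos_INR i).
    field. lra.
Qed.

Definition yy (x : R) := x / (1 + x).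
Definition wN (m : nat) (x : R) (i : nat) : R :=
  / (1 + x) ^ m * (poch (INR m) i / INR (fact i)) * yy x ^ i.
Definition wP (l : R) (j : nat) : R := exp (- l) * (l ^ j / INR (fact j)).

Lemma poch_nonneg x i : 0 <= x -> 0 <= poch x i.
Proof.
  intro Hx; induction i; simpl. lra. apply Rmult_le_pos; auto.
  pose proof (pos_INR i); lra.
Qed.

Lemma yy_bounds x : 0 <= x -> 0 <= yy x < 1.
Proof.
  intro Hx. unfold yy. split.
  - apply Rdiv_le_0_compat; lra.
  - apply Rmult_lt_reg_r with (1 + x). lra.
    field_simplify; lra.
Qed.

Lemma wN_nonneg m x i : 0 <= x -> 0 <= wN m x i.
Proof.
  intro Hx. unfold wN. pose proof (yy_bounds x Hx).
  repeat apply Rmult_le_pos.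
  - left; apply Rinv_0_lt_compat, pow_lt; lra.
  - apply poch_nonneg, pos_INR.
  - left; apply Rinv_0_lt_compat, fact_pos'.
  - apply pow_le; lra.
Qed.

Lemma wP_nonneg l j : 0 <= l -> 0 <= wP l j.
Proof.
  intro Hl. unfold wP. apply Rmult_le_pos. left; apply exp_pos.
  apply Rmult_le_pos. apply pow_le; lra. left; apply Rinv_0_lt_compat, fact_pos'.
Qed.

Lemma wN_sum m x : 0 <= x -> (1 <= m)%nat -> is_series (wN m x) 1.
Proof.
  intros Hx Hm. pose proof (yy_bounds x Hx) as Hy.
  induction Hm as [|m Hm IH].
  - apply isR_ext with (fun i => / (1 + x) * yy x ^ i).
    { intro i. unfold wN. simpl INR. rewrite poch1. field. split.
      apply Rgt_not_eq, fact_pos'. lra. }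
    apply (isR_l _ (/ (1 + x) * / (1 - yy x))).
    unfold yy. field. lra.
    apply isR_scal. apply is_series_geom. rewrite Rabs_pos_eq; lra.
  - set (g := fun l : nat => / (1 + x) * yy x ^ l).
    assert (Hg : is_series g 1).
    { unfold g. apply (isR_l _ (/ (1 + x) * / (1 - yy x))).
    unfold yy. field. lra.
      apply isR_scal. apply is_series_geom. rewrite Rabs_pos_eq; lra. }
    assert (Hgp : forall l, 0 <= g l).
    { intro l; unfold g. apply Rmult_le_pos. left; apply Rinv_0_lt_compat; lra.
      apply pow_le; lra. }
    pose proof (is_series_mult _ _ _ _ IH Hg
       (ex_abs_nonneg _ _ (fun i => wN_nonneg m x i Hx) IH)
       (ex_abs_nonneg _ _ Hgp Hg)) as HM.
    rewrite Rmult_1_l in HM.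
    apply isR_ext with (2 := HM).
    intro i. unfold wN, g.
rewrite (hockey m i).
    rewrite (sum_eq _ (fun j => (poch (INR m) j / INR (fact j)) * (/ (1 + x) ^ S m * yy x ^ i))).
    + rewrite <- scal_sum. simpl pow. ring.
    + intros j Hj. replace (yy x ^ i) with (yy x ^ j * yy x ^ (i - j)).
      simpl pow. field. nz.
      rewrite <- pow_add. f_equal. lia.
Qed.

Fixpoint ff (r : nat) (t : R) : R :=
  match r with O => 1 | S r' => t * ff r' (t - 1) end.

Lemma wN_shift m x i : 0 <= x ->
  wN m x (S i) * INR (S i) = INR m * x * wN (S m) x i.
Proof.
  intro Hx. unfold wN, yy. rewrite poch_S. rewrite <- S_INR.
  change (fact (S i)) with (S i * fact i)%nat. rewrite mult_INR.
  simpl pow. rewrite !S_INR. pose proof (pos_INR i).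
  field. nz.
Qed.

Lemma momN x : 0 <= x -> forall r m, (1 <= m)%nat ->
  is_series (fun i => wN m x i * ff r (INR i)) (poch (INR m) r * x ^ r).
Proof.
  intros Hx r. induction r as [|r IH]; intros m Hm.
  - simpl. apply isR_l with 1. ring.
    apply isR_ext with (wN m x). intro; ring. apply wN_sum; auto.
  - apply isR_decr. simpl. ring.
    specialize (IH (S m) ltac:(lia)).
    apply isR_ext with (fun i => INR m * x * (wN (S m) x i * ff r (INR i))).
    + intro i. change (ff (S r) (INR (S i))) with (INR (S i) * ff r (INR (S i) - 1)).
      replace (INR (S i) - 1) with (INR i) by (rewrite S_INR; ring).
      replace (wN m x (S i) * (INR (S i) * ff r (INR i))) with ((wN m x (S i) * INR (S i)) * ff r (INR i)) by ring.
      rewrite wN_shift; auto. ring.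
    + apply isR_l with (INR m * x * (poch (INR (S m)) r * x ^ r)).
      rewrite poch_S, S_INR. simpl pow. ring.
      apply isR_scal. exact IH.
Qed.

Lemma wP_sum l : is_series (wP l) 1.
Proof.
  assert (H : exp_in l (exp l)).
  { unfold exp. destruct (exist_exp l) as [v Hv]. simpl. exact Hv. }
  unfold exp_in in H. apply is_series_Reals in H.
  apply isR_l with (exp (- l) * exp l).
  rewrite exp_Ropp. field. apply Rgt_not_eq, exp_pos.
  apply isR_ext with (fun i => exp (- l) * (/ INR (fact i) * l ^ i)).
  intro i; unfold wP; field; nz.
  apply isR_scal; exact H.
Qed.

Lemma wP_shift l j : wP l (S j) * INR (S j) = l * wP l j.
Proof.
  unfold wP. change (fact (S j)) with (S j * fact j)%nat. rewrite mult_INR.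
  simpl pow. rewrite !S_INR. pose proof (pos_INR j). field. nz.
Qed.

Lemma momP l : forall r,
  is_series (fun j => wP l j * ff r (INR j)) (l ^ r).
Proof.
  intro r. induction r as [|r IH].
  - simpl. apply isR_ext with (wP l). intro; ring. apply wP_sum.
  - apply isR_decr. simpl. ring.
    apply isR_ext with (fun j => l * (wP l j * ff r (INR j))).
    + intro i. change (ff (S r) (INR (S i))) with (INR (S i) * ff r (INR (S i) - 1)).
      replace (INR (S i) - 1) with (INR i) by (rewrite S_INR; ring).
      replace (wP l (S i) * (INR (S i) * ff r (INR i))) with ((wP l (S i) * INR (S i)) * ff r (INR i)) by ring.
      rewrite wP_shift. ring.
    + simpl pow. apply isR_scal. exact IH.
Qed.

Lemma comb4 (w : nat -> R) (L0 L1 L2 L3 L4 c0 c1 c2 c3 c4 : R) :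
  is_series (fun i => w i * ff 0 (INR i)) L0 ->
  is_series (fun i => w i * ff 1 (INR i)) L1 ->
  is_series (fun i => w i * ff 2 (INR i)) L2 ->
  is_series (fun i => w i * ff 3 (INR i)) L3 ->
  is_series (fun i => w i * ff 4 (INR i)) L4 ->
  is_series (fun i => w i * (c0 * ff 0 (INR i) + c1 * ff 1 (INR i) + c2 * ff 2 (INR i)
                            + c3 * ff 3 (INR i) + c4 * ff 4 (INR i)))
    (c0 * L0 + c1 * L1 + c2 * L2 + c3 * L3 + c4 * L4).
Proof.
  intros H0 H1 H2 H3 H4.
  apply isR_ext with (fun i => c0 * (w i * ff 0 (INR i)) + c1 * (w i * ff 1 (INR i))
     + c2 * (w i * ff 2 (INR i)) + c3 * (w i * ff 3 (INR i)) + c4 * (w i * ff 4 (INR i))).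
  intro; ring.
  repeat apply isR_plus; apply isR_scal; auto.
Qed.

Definition mu4 (n x : R) := 3 * n^2 * x^2 * (1 + x)^2 + n * x * (1 + x) * (1 + 6 * x + 6 * x^2).

Lemma cmomN x n : 0 <= x -> (1 <= n)%nat ->
  is_series (fun i => wN n x i * (INR i - INR n * x) ^ 2) (INR n * x * (1 + x)) /\
  is_series (fun i => wN n x i * (INR i - INR n * x) ^ 4) (mu4 (INR n) x).
Proof.
  intros Hx Hn.
  pose proof (momN x Hx 0 n Hn) as H0.
  pose proof (momN x Hx 1 n Hn) as H1.
  pose proof (momN x Hx 2 n Hn) as H2.
  pose proof (momN x Hx 3 n Hn) as H3.
  pose proof (momN x Hx 4 n Hn) as H4.
  set (c := INR n * x).
  split.
  - pose proof (comb4 _ _ _ _ _ _ (c^2) (1 - 2*c) 1 0 0 H0 H1 H2 H3 H4) as K.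
    eapply isR_l; [ | eapply isR_ext; [ | exact K ] ].
    2: (intro i; cbv beta; simpl ff; ring).
    unfold c; simpl poch; ring.
  - pose proof (comb4 _ _ _ _ _ _ (c^4) (1 - 4*c + 6*c^2 - 4*c^3) (7 - 12*c + 6*c^2) (6 - 4*c) 1 H0 H1 H2 H3 H4) as K.
    eapply isR_l; [ | eapply isR_ext; [ | exact K ] ].
    2: (intro i; cbv beta; simpl ff; ring).
    unfold c, mu4; simpl poch; ring.
Qed.

Lemma cmomP l :
  is_series (fun j => wP l j * INR j ^ 2) (l^2 + l) /\
  is_series (fun j => wP l j * INR j ^ 4) (l^4 + 6 * l^3 + 7 * l^2 + l).
Proof.
  pose proof (momP l 0) as H0. pose proof (momP l 1) as H1.
  pose proof (momP l 2) as H2. pose proof (momP l 3) as H3. pose proof (momP l 4) as H4.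
  split.
  - pose proof (comb4 _ _ _ _ _ _ 0 1 1 0 0 H0 H1 H2 H3 H4) as K.
    eapply isR_l; [ | eapply isR_ext; [ | exact K ] ].
    2: (intro i; cbv beta; simpl ff; ring).
    ring.
  - pose proof (comb4 _ _ _ _ _ _ 0 1 7 6 1 H0 H1 H2 H3 H4) as K.
    eapply isR_l; [ | eapply isR_ext; [ | exact K ] ].
    2: (intro i; cbv beta; simpl ff; ring).
    ring.
Qed.

Lemma W_conv n k a x : 0 <= x ->
  W n k a x = sum_f_R0 (fun i => wN n x i * wP (a * yy x) (k - i)) k.
Proof.
  intro Hx. unfold W, pk.
  replace (a * x / (1 + x)) with (a * yy x) by (unfold yy; field; lra).
  set (E := exp (- (a * yy x))).
  replace (E * (sum_f_R0 (fun i => Binomial.C k i * poch (INR n) i * a ^ (k - i)) k / INR (fact k)) *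
    (x ^ k / (1 + x) ^ (k + n)))
   with ((E / INR (fact k) * (x ^ k / (1 + x) ^ (k + n))) *
     sum_f_R0 (fun i => Binomial.C k i * poch (INR n) i * a ^ (k - i)) k)
   by (field; nz).
  rewrite scal_sum. apply sum_eq. intros i Hi.
  unfold wN, wP, Binomial.C. fold E.
  rewrite Rpow_mult_distr.
  replace (x ^ k) with (yy x ^ k * (1 + x) ^ k)
    by (unfold yy; rewrite <- Rpow_mult_distr; f_equal; field; lra).
  replace (yy x ^ k) with (yy x ^ i * yy x ^ (k - i))
    by (rewrite <- pow_add; f_equal; lia).
  rewrite pow_add.
  field. nz.
Qed.

Lemma W_sum n a x : 0 <= x -> 0 <= a -> (1 <= n)%nat -> is_series (fun k => W n k a x) 1.
Proof.
  intros Hx Ha Hn.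
  assert (Hl : 0 <= a * yy x) by (apply Rmult_le_pos; auto; apply yy_bounds; auto).
  pose proof (is_series_mult _ _ _ _ (wN_sum n x Hx Hn) (wP_sum (a * yy x))
    (ex_abs_nonneg _ _ (fun i => wN_nonneg n x i Hx) (wN_sum n x Hx Hn))
    (ex_abs_nonneg _ _ (fun j => wP_nonneg _ j Hl) (wP_sum _))) as M.
  eapply isR_l; [ | eapply isR_ext; [ | exact M ] ].
  ring. intro k; cbv beta. rewrite W_conv; auto.
Qed.

Lemma conv_sep (u v A B : nat -> R) (P0 EA EB : R) :
  (forall i, 0 <= u i) -> (forall j, 0 <= v j) -> (forall i, 0 <= A i) -> (forall j, 0 <= B j) ->
  is_series u 1 -> is_series v 1 ->
  is_series (fun i => u i * A i) EA -> is_series (fun j => v j * B j) EB ->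
  is_series (fun k => sum_f_R0 (fun i => u i * v (k - i)%nat * (P0 + A i + B (k - i)%nat)) k)
    (P0 + EA + EB).
Proof.
  intros Hu Hv HA HB Su Sv SA SB.
  assert (HuA : forall i, 0 <= u i * A i) by (intro; apply Rmult_le_pos; auto).
  assert (HvB : forall i, 0 <= v i * B i) by (intro; apply Rmult_le_pos; auto).
  pose proof (is_series_mult _ _ _ _ Su Sv (ex_abs_nonneg _ _ Hu Su) (ex_abs_nonneg _ _ Hv Sv)) as M1.
  pose proof (is_series_mult _ _ _ _ SA Sv (ex_abs_nonneg _ _ HuA SA) (ex_abs_nonneg _ _ Hv Sv)) as M2.
  pose proof (is_series_mult _ _ _ _ Su SB (ex_abs_nonneg _ _ Hu Su) (ex_abs_nonneg _ _ HvB SB)) as M3.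
  pose proof (isR_plus _ _ _ _ (isR_plus _ _ _ _ (isR_scal P0 _ _ M1) M2) M3) as M.
  eapply isR_l; [ | eapply isR_ext; [ | exact M ] ].
  ring. intro k; cbv beta.
  rewrite scal_sum, <- !sum_plus. apply sum_eq. intros; ring.
Qed.

Lemma Om_lub f d : C_rho f -> 0 < d -> is_lub (Omega_set f d) (Omega f d).
Proof.
  intros [_ [Mf HM]] Hd. unfold Omega. apply epsilon_spec.
  destruct (completeness (Omega_set f d)) as [m Hm].
  - exists (3 * Rabs Mf). intros r [z [h [Hz [Hh [Hzh ->]]]]].
    pose proof (HM _ Hzh) as H1. pose proof (HM _ Hz) as H2.
    unfold rho in *.
    assert (HD : 0 < (1 + h ^ 2) * (1 + z ^ 2)) by (apply Rmult_lt_0_compat; nra).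
    apply Rmult_le_reg_r with ((1 + h ^ 2) * (1 + z ^ 2)); auto.
    unfold Rdiv. rewrite Rmult_assoc, Rinv_l, Rmult_1_r by lra.
    assert (HMa : Mf <= Rabs Mf) by apply Rle_abs.
    assert (HM0 : 0 <= Rabs Mf) by apply Rabs_pos.
    assert (E1 : Rabs (f (z + h)) <= Rabs Mf * (2 * (1 + h ^ 2) * (1 + z ^ 2))).
    { eapply Rle_trans; [exact H1|].
      assert (1 + (z + h) ^ 2 <= 2 * (1 + h ^ 2) * (1 + z ^ 2)) by nra.
      assert (0 <= 1 + (z + h) ^ 2) by nra. nra. }
    assert (E2 : Rabs (f z) <= Rabs Mf * ((1 + h ^ 2) * (1 + z ^ 2))).
    { eapply Rle_trans; [exact H2|].
      assert (1 + z ^ 2 <= (1 + h ^ 2) * (1 + z ^ 2)) by nra.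
      assert (0 <= 1 + z ^ 2) by nra. nra. }
    unfold Rminus. eapply Rle_trans; [apply Rabs_triang|]. rewrite Rabs_Ropp. nra.
  - exists 0. exists 0, 0. split; [lra|]. split. rewrite Rabs_R0; lra.
    split; [lra|]. rewrite Rplus_0_r, Rminus_diag, Rabs_R0. unfold Rdiv. ring.
  - exists m; exact Hm.
Qed.

Lemma Om_ge0 f d : C_rho f -> 0 < d -> 0 <= Omega f d.
Proof.
  intros Hf Hd. destruct (Om_lub f d Hf Hd) as [Hub _]. apply Hub.
  exists 0, 0. split; [lra|]. split. rewrite Rabs_R0; lra.
  split; [lra|]. rewrite Rplus_0_r, Rminus_diag, Rabs_R0. unfold Rdiv. ring.
Qed.

Lemma Om_elem f d z h : C_rho f -> 0 < d -> 0 <= z -> Rabs h <= d -> 0 <= z + h ->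
  Rabs (f (z + h) - f z) <= (1 + h ^ 2) * (1 + z ^ 2) * Omega f d.
Proof.
  intros Hf Hd Hz Hh Hzh. destruct (Om_lub f d Hf Hd) as [Hub _].
  assert (HD : 0 < (1 + h ^ 2) * (1 + z ^ 2)) by (apply Rmult_lt_0_compat; nra).
  assert (Hel : Rabs (f (z + h) - f z) / ((1 + h ^ 2) * (1 + z ^ 2)) <= Omega f d).
  { apply Hub. exists z, h. auto. }
  apply Rmult_le_reg_r with (/ ((1 + h ^ 2) * (1 + z ^ 2))).
  apply Rinv_0_lt_compat; auto.
  replace ((1 + h ^ 2) * (1 + z ^ 2) * Omega f d * / ((1 + h ^ 2) * (1 + z ^ 2)))
    with (Omega f d). exact Hel.
  field. split; nra.
Qed.

Lemma telescope (g : R -> R) (x s K : R) (m : nat) :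
  (forall j, (j < m)%nat -> Rabs (g (x + INR (S j) * s) - g (x + INR j * s)) <= K) ->
  forall j, (j <= m)%nat -> Rabs (g (x + INR j * s) - g x) <= INR j * K.
Proof.
  intros Hs j. induction j as [|j IH]; intro Hj.
  - simpl. rewrite Rmult_0_l, Rplus_0_r, Rminus_diag, Rabs_R0. lra.
  - specialize (IH ltac:(lia)). specialize (Hs j ltac:(lia)).
    replace (g (x + INR (S j) * s) - g x) with
      ((g (x + INR (S j) * s) - g (x + INR j * s)) + (g (x + INR j * s) - g x)) by ring.
    eapply Rle_trans; [apply Rabs_triang|]. replace (INR (S j) * K) with (INR j * K + K) by (rewrite S_INR; ring). lra.
Qed.

Lemma PW f (np : R) x t : C_rho f -> 1 <= np -> 0 <= x -> 0 <= t ->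
  Rabs (f t - f x) <= 4 * (1 + x ^ 2) * Omega f (/ sqrt np) * (2 + np * (t - x) ^ 2) * (1 + (t - x) ^ 2).
Proof.
  intros Hf Hn Hx Ht.
  set (sq := sqrt np).
  assert (Hsq : 0 < sq) by (apply sqrt_lt_R0; lra).
  assert (Hsq2 : sq * sq = np) by (apply sqrt_sqrt; lra).
  assert (Hsq1 : 1 <= sq).
  { destruct (Rle_lt_dec 1 sq); auto. nra. }
  set (d := / sq).
  assert (Hd : 0 < d) by (apply Rinv_0_lt_compat; auto).
  assert (Hd1 : d <= 1).
  { unfold d. rewrite <- Rinv_1. apply Rinv_le_contravar; lra. }
  set (Om := Omega f d).
  assert (HOm : 0 <= Om) by (apply Om_ge0; auto).
  set (h := t - x).
  set (r := Rabs h * sq).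
  assert (Hr : 0 <= r) by (unfold r; apply Rmult_le_pos; [apply Rabs_pos | lra]).
  destruct (archimed r) as [Hu1 Hu2].
  set (m := Z.to_nat (up r)).
  assert (Hz : (0 < up r)%Z) by (apply lt_0_IZR; lra).
  assert (HmR : INR m = IZR (up r)).
  { unfold m. rewrite INR_IZR_INZ, Z2Nat.id; auto. lia. }
  assert (Hm0 : 0 < INR m) by lra.
  set (s := h / INR m).
  set (K := 4 * (1 + x ^ 2) * (1 + h ^ 2) * Om).
  assert (Hs : Rabs s <= d).
  { unfold s, Rdiv. rewrite Rabs_mult, (Rabs_pos_eq (/ INR m)) by (left; apply Rinv_0_lt_compat; lra).
    set (q := Rabs h * / INR m).
    assert (Hq : Rabs h = q * INR m) by (unfold q; field; lra).
    assert (q * sq < 1).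
    { apply Rmult_lt_reg_r with (INR m); auto. rewrite <- HmR in Hu1. assert (q * sq * INR m = r) by (unfold r; rewrite Hq; ring). lra. }
    unfold d. replace q with (q * sq * / sq) by (field; lra).
    rewrite <- (Rmult_1_l (/ sq)) at 2. apply Rmult_le_compat_r.
    left; apply Rinv_0_lt_compat; auto. lra. }
  assert (Hs2 : s ^ 2 <= 1).
  { assert (Rabs s * Rabs s <= 1) by (pose proof (Rabs_pos s); nra).
    rewrite <- Rabs_mult in H. simpl. rewrite Rmult_1_r.
    rewrite Rabs_pos_eq in H; nra. }
  assert (Hstep : forall j, (j < m)%nat ->
     Rabs (f (x + INR (S j) * s) - f (x + INR j * s)) <= K).
  { intros j Hj.
    set (tau := INR j / INR m).
    assert (Htau : 0 <= tau <= 1).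
    { unfold tau. split. apply Rdiv_le_0_compat; auto; apply pos_INR.
      apply Rmult_le_reg_r with (INR m); auto. field_simplify; try lra.
      apply le_INR; lia. }
    assert (Ejs : INR j * s = tau * h) by (unfold tau, s; field; lra).
    assert (Hz1 : 0 <= x + tau * h) by (unfold h in *; nra).
    replace (x + INR (S j) * s) with ((x + INR j * s) + s) by (rewrite S_INR; ring).
    rewrite Ejs.
    assert (Hz2 : 0 <= x + tau * h + s).
    { replace (x + tau * h + s) with (x + INR (S j) * s) by (rewrite S_INR; rewrite <- Ejs; ring).
      set (tau' := INR (S j) / INR m).
      assert (Htau' : 0 <= tau' <= 1).
      { unfold tau'. split. apply Rdiv_le_0_compat; auto; apply pos_INR.
        apply Rmult_le_reg_r with (INR m); auto. field_simplify; try lra.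
        apply le_INR; lia. }
      replace (INR (S j) * s) with (tau' * h) by (unfold tau', s; field; lra).
      unfold h in *; nra. }
    eapply Rle_trans. apply (Om_elem f d); auto.
    unfold K.
    assert (Hw : 1 + (x + tau * h) ^ 2 <= 2 * (1 + x ^ 2) * (1 + h ^ 2)).
    { assert (Hw2 : (tau * h) ^ 2 <= h ^ 2) by (rewrite Rpow_mult_distr; assert (tau ^ 2 <= 1) by nra; assert (0 <= h ^ 2) by nra; nra).
      assert (0 <= (x - tau * h) ^ 2) by apply pow2_ge_0. assert (0 <= x ^ 2 * h ^ 2) by (apply Rmult_le_pos; apply pow2_ge_0).
      assert (E1: (x + tau * h)^2 = 2*x^2 + 2*(tau * h)^2 - (x-tau * h)^2) by ring.
      assert (E2: 2*(1+x^2)*(1+h^2) = 2 + 2*x^2 + 2*h^2 + 2*(x^2*h^2)) by ring.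
      rewrite E1, E2. lra. }
    assert (0 <= 1 + (x + tau * h) ^ 2) by nra.
    assert (0 <= 1 + s ^ 2) by nra.
    fold Om.
    apply Rle_trans with (2 * (2 * (1 + x ^ 2) * (1 + h ^ 2)) * Om).
    apply Rmult_le_compat_r; auto. apply Rmult_le_compat; lra.
    lra. }
  pose proof (telescope f x s K m Hstep m (le_n m)) as Ht1.
  replace (x + INR m * s) with t in Ht1 by (unfold s, h; field; lra).
  assert (HK : 0 <= K) by (unfold K; repeat apply Rmult_le_pos; nra).
  assert (Hmr : INR m <= 2 + np * h ^ 2).
  { assert (r * r = np * h ^ 2).
    { unfold r. rewrite <- Hsq2. replace (Rabs h * sq * (Rabs h * sq)) with ((Rabs h * Rabs h) * (sq * sq)) by ring.
      rewrite <- Rabs_mult, Rabs_pos_eq by nra. simpl; ring. }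
    nra. }
  fold h. fold d. fold Om.
  apply Rle_trans with (INR m * K); auto.
  replace (4 * (1 + x ^ 2) * Om * (2 + np * h ^ 2) * (1 + h ^ 2)) with ((2 + np * h ^ 2) * K) by (unfold K; ring).
  apply Rmult_le_compat_r; auto.
Qed.

Lemma integ f lo hi : C_rho f -> 0 <= lo -> lo <= hi -> Riemann_integrable f lo hi.
Proof.
  intros [Hc _] Hlo Hlh.
  set (g := fun t => f (Rmax 0 t)).
  assert (Hg : Riemann_integrable g lo hi).
  { apply continuity_implies_RiemannInt; auto.
    intros z [Hz1 Hz2].
    unfold continuity_pt, continue_in, limit1_in, limit_in.
    intros eps Heps.
    destruct (Hc z ltac:(lra) eps Heps) as [alp [Halp H]].
    exists alp. split; auto. intros y [_ Hy].
    simpl in *. unfold Rdist in *.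
    unfold g. rewrite (Rmax_right 0 z) by lra.
    apply H. split. apply Rmax_l.
    unfold Rmax. destruct (Rle_dec 0 y).
    - exact Hy.
    - eapply Rle_lt_trans; [|exact Hy].
      rewrite !Rabs_left1 by lra. lra. }
  apply Riemann_integrable_ext with g; auto.
  intros t Ht. unfold g. rewrite Rmax_right; auto.
  rewrite Rmin_left in Ht; lra.
Qed.

Lemma Rint_spec f lo hi (pr : Riemann_integrable f lo hi) : Rint f lo hi = RiemannInt pr.
Proof.
  unfold Rint.
  destruct (epsilon_spec (inhabits 0)
    (fun I => exists pr : Riemann_integrable f lo hi, RiemannInt pr = I)) as [pr0 H0].
  - exists (RiemannInt pr), pr; reflexivity.
  - rewrite <- H0. apply RiemannInt_P5.
Qed.

Lemma series_sum_spec u l : infinite_sum u l -> series_sum u = l.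
Proof.
  intro H. unfold series_sum.
  apply (uniqueness_sum u). apply epsilon_spec. exists l; exact H. exact H.
Qed.

Lemma int_avg f lo hi np c v : C_rho f -> 0 <= lo -> 0 < np -> hi = lo + / np ->
  (forall t, lo < t < hi -> Rabs (f t - v) <= c) ->
  Rabs (np * Rint f lo hi - v) <= c.
Proof.
  intros Hf Hlo Hnp Hhi Hb.
  assert (Hlh : lo <= hi) by (rewrite Hhi; pose proof (Rinv_0_lt_compat _ Hnp); lra).
  pose proof (integ f lo hi Hf Hlo Hlh) as pr.
  rewrite (Rint_spec f lo hi pr).
  pose proof (RiemannInt_P14 lo hi (v + c)) as prU.
  pose proof (RiemannInt_P14 lo hi (v - c)) as prL.
  assert (HU : RiemannInt pr <= RiemannInt prU).
  { apply RiemannInt_P19; auto. intros t Ht. unfold fct_cte.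
    specialize (Hb t Ht). apply Rabs_le_between in Hb. lra. }
  assert (HL : RiemannInt prL <= RiemannInt pr).
  { apply RiemannInt_P19; auto. intros t Ht. unfold fct_cte.
    specialize (Hb t Ht). apply Rabs_le_between in Hb. lra. }
  rewrite (RiemannInt_const (v + c)) in HU.
  rewrite (RiemannInt_const (v - c)) in HL.
  replace ((v + c) * (hi - lo)) with ((v + c) / np) in HU by (rewrite Hhi; field; lra).
  replace ((v - c) * (hi - lo)) with ((v - c) / np) in HL by (rewrite Hhi; field; lra).
  apply Rabs_le_between. split.
  - apply Rmult_le_compat_l with (r := np) in HL; [|lra].
    replace (np * ((v - c) / np)) with (v - c) in HL by (field; lra). lra.
  - apply Rmult_le_compat_l with (r := np) in HU; [|lra].
    replace (np * ((v + c) / np)) with (v + c) in HU by (field; lra). lra.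
Qed.

Lemma sq3 D E F : (D + E + F) ^ 2 <= 3 * (D ^ 2 + E ^ 2 + F ^ 2).
Proof.
  assert (0 <= (D - E) ^ 2) by apply pow2_ge_0.
  assert (0 <= (E - F) ^ 2) by apply pow2_ge_0.
  assert (0 <= (D - F) ^ 2) by apply pow2_ge_0.
  assert (E1 : 3 * (D ^ 2 + E ^ 2 + F ^ 2) - (D + E + F) ^ 2 = (D - E) ^ 2 + (E - F) ^ 2 + (D - F) ^ 2) by ring.
  lra.
Qed.

Lemma alg (np u D E F G : R) : 1 <= np -> np * u = D + E + F -> Rabs F <= G ->
  (2 + np * u ^ 2) * (1 + u ^ 2) <=
  2 + 9 * G ^ 2 / np + 27 * G ^ 4 / np ^ 3 + (9 * D ^ 2 / np + 27 * D ^ 4 / np ^ 3)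
    + (9 * E ^ 2 / np + 27 * E ^ 4 / np ^ 3).
Proof.
  intros Hn HU HF.
  set (U := np * u) in *.
  set (iv := / np).
  assert (Hiv : 0 < iv) by (apply Rinv_0_lt_compat; lra).
  assert (Hiv1 : iv <= 1) by (unfold iv; rewrite <- Rinv_1; apply Rinv_le_contravar; lra).
  assert (Hu : u = U * iv) by (unfold U, iv; field; lra).
  assert (HF2 : F ^ 2 <= G ^ 2).
  { pose proof (Rabs_pos F). rewrite <- (pow2_abs F). apply pow_incr. lra. }
  assert (HF4 : F ^ 4 <= G ^ 4).
  { replace (F ^ 4) with ((F ^ 2) ^ 2) by ring. replace (G ^ 4) with ((G ^ 2) ^ 2) by ring.
    apply pow_incr. split; [apply pow2_ge_0|lra]. }
  assert (HU2 : U ^ 2 <= 3 * (D ^ 2 + E ^ 2 + G ^ 2)).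
  { rewrite HU. pose proof (sq3 D E F). lra. }
  assert (HU4 : U ^ 4 <= 27 * (D ^ 4 + E ^ 4 + G ^ 4)).
  { replace (U ^ 4) with ((U ^ 2) ^ 2) by ring.
    assert ((U ^ 2) ^ 2 <= (3 * (D ^ 2 + E ^ 2 + F ^ 2)) ^ 2).
    { apply pow_incr. split. apply pow2_ge_0. rewrite HU. apply sq3. }
    pose proof (sq3 (D ^ 2) (E ^ 2) (F ^ 2)).
    replace ((3 * (D ^ 2 + E ^ 2 + F ^ 2)) ^ 2) with (9 * (D ^ 2 + E ^ 2 + F ^ 2) ^ 2) in H by ring.
    replace ((D ^ 2) ^ 2) with (D ^ 4) in H0 by ring.
    replace ((E ^ 2) ^ 2) with (E ^ 4) in H0 by ring.
    replace ((F ^ 2) ^ 2) with (F ^ 4) in H0 by ring.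
    lra. }
  assert (E0 : (2 + np * u ^ 2) * (1 + u ^ 2) = 2 + 2 * U ^ 2 * iv ^ 2 + U ^ 2 * iv + U ^ 4 * iv ^ 3).
  { rewrite Hu. unfold U, iv. field. lra. }
  assert (E1 : 2 + 9 * G ^ 2 / np + 27 * G ^ 4 / np ^ 3 + (9 * D ^ 2 / np + 27 * D ^ 4 / np ^ 3)
    + (9 * E ^ 2 / np + 27 * E ^ 4 / np ^ 3) =
    2 + 9 * (D ^ 2 + E ^ 2 + G ^ 2) * iv + 27 * (D ^ 4 + E ^ 4 + G ^ 4) * iv ^ 3).
  { unfold iv. field. lra. }
  rewrite E0, E1.
  assert (Hi2 : iv ^ 2 <= iv) by (simpl; nra).
  assert (0 <= U ^ 2) by apply pow2_ge_0.
  assert (A1 : U ^ 2 * iv ^ 2 <= U ^ 2 * iv) by (apply Rmult_le_compat_l; auto).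
  assert (A2 : U ^ 2 * iv <= 3 * (D ^ 2 + E ^ 2 + G ^ 2) * iv) by (apply Rmult_le_compat_r; lra).
  assert (A3 : U ^ 4 * iv ^ 3 <= 27 * (D ^ 4 + E ^ 4 + G ^ 4) * iv ^ 3).
  { apply Rmult_le_compat_r; auto. apply pow_le; lra. }
  lra.
Qed.

Lemma shrink q A : 0 <= q <= 1 -> 0 <= A -> q * A <= A.
Proof. intros. nra. Qed.

Definition K0 (a al be : R) :=
  let cG := 2 * ((al + 1) ^ 2 + be ^ 2) in
  2 + 9 * cG + 27 * cG ^ 2 + 18 + 27 * 38 + 9 * (a ^ 2 + a) + 27 * (a ^ 4 + 6 * a ^ 3 + 7 * a ^ 2 + a).

Lemma K0_pos a al be : 0 <= a -> 0 < K0 a al be.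
Proof.
  intro Ha. unfold K0.
  assert (0 <= 2 * ((al + 1) ^ 2 + be ^ 2)) by (assert (0 <= (al+1)^2) by apply pow2_ge_0; assert (0 <= be^2) by apply pow2_ge_0; lra).
  assert (0 <= (2 * ((al + 1) ^ 2 + be ^ 2)) ^ 2) by apply pow2_ge_0.
  assert (0 <= a ^ 2) by apply pow2_ge_0.
  assert (0 <= a ^ 3) by (apply pow_le; lra).
  assert (0 <= a ^ 4) by (apply pow_le; lra).
  lra.
Qed.

Lemma bracket (nR x np lam a al be : R) :
  1 <= nR <= np -> 0 <= x -> 0 <= al -> 0 <= be -> 0 <= lam <= a ->
  2 + 9 * (al + 1 + be * x) ^ 2 / np + 27 * (al + 1 + be * x) ^ 4 / np ^ 3
  + (9 / np * (nR * x * (1 + x)) + 27 / np ^ 3 * mu4 nR x)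
  + (9 / np * (lam ^ 2 + lam) + 27 / np ^ 3 * (lam ^ 4 + 6 * lam ^ 3 + 7 * lam ^ 2 + lam))
  <= K0 a al be * (1 + x ^ 2) ^ 2.
Proof.
  intros [Hn1 Hn2] Hx Hal Hbe [Hl1 Hl2].
  set (iv := / np).
  assert (Hnp : 1 <= np) by lra.
  assert (Hiv : 0 < iv) by (apply Rinv_0_lt_compat; lra).
  assert (Hiv1 : iv <= 1) by (unfold iv; rewrite <- Rinv_1; apply Rinv_le_contravar; lra).
  set (p := nR * iv).
  assert (Hp : 0 <= p <= 1).
  { unfold p. split. apply Rmult_le_pos; lra.
    unfold iv. apply Rmult_le_reg_r with np; [lra|]. rewrite Rmult_assoc, Rinv_l by lra. lra. }
  set (X := 1 + x ^ 2).
  assert (HX1 : 1 <= X) by (unfold X; pose proof (pow2_ge_0 x); lra).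
  assert (HXX : X <= X ^ 2) by (simpl; nra).
  set (G := al + 1 + be * x).
  set (cG := 2 * ((al + 1) ^ 2 + be ^ 2)).
  assert (HG0 : 0 <= G) by (unfold G; nra).
  assert (HG2 : G ^ 2 <= cG * X).
  { unfold G, cG, X.
    assert (0 <= (al + 1 - be * x) ^ 2) by apply pow2_ge_0.
    assert (0 <= (al + 1) ^ 2 * x ^ 2) by (apply Rmult_le_pos; apply pow2_ge_0).
    assert (0 <= be ^ 2) by apply pow2_ge_0.
    assert (E : 2 * ((al + 1) ^ 2 + be ^ 2) * (1 + x ^ 2) - (al + 1 + be * x) ^ 2
       = (al + 1 - be * x) ^ 2 + 2 * ((al + 1) ^ 2 * x ^ 2) + 2 * be ^ 2) by ring.
    assert (0 <= be ^ 2 * x ^ 2) by (apply Rmult_le_pos; apply pow2_ge_0). lra. }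
  assert (HcG : 0 <= cG) by (unfold cG; pose proof (pow2_ge_0 (al+1)); pose proof (pow2_ge_0 be); lra).
  assert (HG4 : G ^ 4 <= cG ^ 2 * X ^ 2).
  { replace (G ^ 4) with ((G ^ 2) ^ 2) by ring. rewrite <- Rpow_mult_distr.
    apply pow_incr. split; [apply pow2_ge_0 | lra]. }
  set (y0 := x * (1 + x)).
  assert (Hy0 : 0 <= y0) by (unfold y0; nra).
  assert (Hy0X : y0 <= 2 * X) by (unfold y0, X; nra).
  assert (T2 : 9 * G ^ 2 / np <= 9 * cG * X ^ 2).
  { unfold Rdiv. fold iv. assert (9 * G ^ 2 * iv <= 9 * G ^ 2).
    { rewrite Rmult_comm. apply shrink; [lra|]. pose proof (pow2_ge_0 G); lra. }
    assert (cG * X <= cG * X ^ 2) by (apply Rmult_le_compat_l; lra). lra. }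
  assert (Hiv3 : 0 <= iv ^ 3 <= 1).
  { split. apply pow_le; lra. replace 1 with (1 ^ 3) by ring. apply pow_incr; lra. }
  assert (T3 : 27 * G ^ 4 / np ^ 3 <= 27 * cG ^ 2 * X ^ 2).
  { unfold Rdiv. rewrite Rinv_pow by lra. fold iv.
    assert (27 * G ^ 4 * iv ^ 3 <= 27 * G ^ 4).
    { rewrite Rmult_comm. apply shrink; auto. pose proof (pow_le G 4 HG0). lra. }
    lra. }
  assert (T4 : 9 / np * (nR * x * (1 + x)) <= 18 * X ^ 2).
  { unfold Rdiv. fold iv. replace (9 * iv * (nR * x * (1 + x))) with (9 * (p * y0)) by (unfold p, y0; ring).
    assert (p * y0 <= y0) by (apply shrink; auto). lra. }
  assert (T5 : 27 / np ^ 3 * mu4 nR x <= 27 * 38 * X ^ 2).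
  { unfold Rdiv. rewrite Rinv_pow by lra. fold iv.
    replace (27 * iv ^ 3 * mu4 nR x) with
      (27 * (3 * (p * (p * (iv * y0 ^ 2))) + p * (iv * (iv * (y0 * (1 + 6 * y0)))))) by (unfold mu4, p, y0; ring).
    assert (A1 : p * (p * (iv * y0 ^ 2)) <= y0 ^ 2).
    { assert (0 <= y0 ^ 2) by apply pow2_ge_0.
      assert (iv * y0 ^ 2 <= y0 ^ 2) by (apply shrink; lra).
      assert (0 <= iv * y0 ^ 2) by (apply Rmult_le_pos; lra).
      assert (p * (iv * y0 ^ 2) <= iv * y0 ^ 2) by (apply shrink; lra).
      assert (0 <= p * (iv * y0 ^ 2)) by (apply Rmult_le_pos; lra).
      assert (p * (p * (iv * y0 ^ 2)) <= p * (iv * y0 ^ 2)) by (apply shrink; lra). lra. }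
    assert (A2 : p * (iv * (iv * (y0 * (1 + 6 * y0)))) <= y0 * (1 + 6 * y0)).
    { assert (0 <= y0 * (1 + 6 * y0)) by nra.
      assert (iv * (y0 * (1 + 6 * y0)) <= y0 * (1 + 6 * y0)) by (apply shrink; lra).
      assert (0 <= iv * (y0 * (1 + 6 * y0))) by (apply Rmult_le_pos; lra).
      assert (iv * (iv * (y0 * (1 + 6 * y0))) <= iv * (y0 * (1 + 6 * y0))) by (apply shrink; lra).
      assert (0 <= iv * (iv * (y0 * (1 + 6 * y0)))) by (apply Rmult_le_pos; lra).
      assert (p * (iv * (iv * (y0 * (1 + 6 * y0)))) <= iv * (iv * (y0 * (1 + 6 * y0)))) by (apply shrink; lra).
      lra. }
    assert (B1 : y0 ^ 2 <= 4 * X ^ 2).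
    { replace (4 * X ^ 2) with ((2 * X) ^ 2) by ring. apply pow_incr; lra. }
    assert (B2 : y0 * (1 + 6 * y0) <= 26 * X ^ 2).
    { assert (y0 * (1 + 6 * y0) <= 2 * X * (1 + 12 * X)).
      { apply Rmult_le_compat; lra. }
      nra. }
    lra. }
  assert (Hlp : 0 <= lam ^ 2 + lam) by (pose proof (pow2_ge_0 lam); lra).
  assert (Hla : lam ^ 2 + lam <= a ^ 2 + a).
  { assert (lam ^ 2 <= a ^ 2) by (apply pow_incr; lra). lra. }
  assert (Hlp4 : 0 <= lam ^ 4 + 6 * lam ^ 3 + 7 * lam ^ 2 + lam).
  { pose proof (pow_le lam 4 Hl1). pose proof (pow_le lam 3 Hl1). pose proof (pow_le lam 2 Hl1). lra. }
  assert (Hla4 : lam ^ 4 + 6 * lam ^ 3 + 7 * lam ^ 2 + lam <= a ^ 4 + 6 * a ^ 3 + 7 * a ^ 2 + a).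
  { assert (lam ^ 4 <= a ^ 4) by (apply pow_incr; lra).
    assert (lam ^ 3 <= a ^ 3) by (apply pow_incr; lra).
    assert (lam ^ 2 <= a ^ 2) by (apply pow_incr; lra). lra. }
  assert (T6 : 9 / np * (lam ^ 2 + lam) + 27 / np ^ 3 * (lam ^ 4 + 6 * lam ^ 3 + 7 * lam ^ 2 + lam)
     <= (9 * (a ^ 2 + a) + 27 * (a ^ 4 + 6 * a ^ 3 + 7 * a ^ 2 + a)) * X ^ 2).
  { unfold Rdiv. rewrite Rinv_pow by lra. fold iv.
    assert (iv * (lam ^ 2 + lam) <= lam ^ 2 + lam) by (apply shrink; lra).
    assert (iv ^ 3 * (lam ^ 4 + 6 * lam ^ 3 + 7 * lam ^ 2 + lam) <= lam ^ 4 + 6 * lam ^ 3 + 7 * lam ^ 2 + lam)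
      by (apply shrink; lra).
    assert (0 <= a ^ 2 + a) by lra.
    assert (0 <= a ^ 4 + 6 * a ^ 3 + 7 * a ^ 2 + a) by lra.
    assert ((9 * (a ^ 2 + a) + 27 * (a ^ 4 + 6 * a ^ 3 + 7 * a ^ 2 + a)) * 1 <=
            (9 * (a ^ 2 + a) + 27 * (a ^ 4 + 6 * a ^ 3 + 7 * a ^ 2 + a)) * X ^ 2)
      by (apply Rmult_le_compat_l; lra).
    lra. }
  unfold K0. fold cG. fold X. fold G in T2, T3 |- *.
  assert (2 <= 2 * X ^ 2) by lra.
  lra.
Qed.

Theorem theorem4p3 (a alpha beta : R) (ha : 0 <= a) (halpha : 0 <= alpha)
  (hab : alpha <= beta) :
  exists M : R, M > 0 /\
    forall (f : R -> R), C_rho_k f ->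
    forall n : nat, (1 <= n)%nat ->
    forall x : R, 0 <= x ->
      Rabs (T n a alpha beta f x - f x) / (1 + x ^ 2) ^ 3
      <= M * Omega f (/ sqrt (INR n + beta)).
Proof.
  assert (Hbe : 0 <= beta) by lra.
  exists (4 * K0 a alpha beta). split.
  { pose proof (K0_pos a alpha beta ha). lra. }
  intros f Hfk n Hn x Hx.
  destruct Hfk as [Hf _].
  set (np := INR n + beta).
  assert (HnR : 1 <= INR n) by (replace 1 with (INR 1) by reflexivity; apply le_INR; auto).
  assert (Hnp : 1 <= np) by (unfold np; lra).
  set (d := / sqrt np).
  assert (Hd : 0 < d) by (apply Rinv_0_lt_compat, sqrt_lt_R0; lra).
  set (Om := Omega f d).
  assert (HOm : 0 <= Om) by (apply Om_ge0; auto).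
  pose proof (yy_bounds x Hx) as Hyy.
  set (lam := a * yy x).
  assert (Hlam : 0 <= lam <= a) by (unfold lam; split; nra).
  set (G := alpha + 1 + beta * x).
  set (pref := 4 * (1 + x ^ 2) * Om).
  assert (Hpref : 0 <= pref) by (unfold pref; pose proof (pow2_ge_0 x); apply Rmult_le_pos; lra).
  set (Af := fun i : nat => 9 * (INR i - INR n * x) ^ 2 / np + 27 * (INR i - INR n * x) ^ 4 / np ^ 3).
  set (Bf := fun j : nat => 9 * INR j ^ 2 / np + 27 * INR j ^ 4 / np ^ 3).
  set (P0 := 2 + 9 * G ^ 2 / np + 27 * G ^ 4 / np ^ 3).
  set (lo := fun k : nat => (INR k + alpha) / np).
  set (hi := fun k : nat => (INR k + alpha + 1) / np).
  set (Rk := fun k => np * Rint f (lo k) (hi k) - f x).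
  assert (Key1 : forall k i, (i <= k)%nat -> Rabs (Rk k) <= pref * (P0 + Af i + Bf (k - i)%nat)).
  { intros k i Hik. unfold Rk.
    apply int_avg; auto.
    - unfold lo. apply Rdiv_le_0_compat; [pose proof (pos_INR k); lra | lra].
    - lra.
    - unfold lo, hi. field. lra.
    - intros t [Ht1 Ht2]. unfold lo, hi in Ht1, Ht2.
      assert (Hlo0 : 0 <= (INR k + alpha) / np) by (apply Rdiv_le_0_compat; [pose proof (pos_INR k); lra | lra]).
      assert (Ht0 : 0 <= t) by lra.
      assert (Hnt1 : INR k + alpha < np * t).
      { apply Rmult_lt_compat_l with (r := np) in Ht1; [|lra].
        replace (np * ((INR k + alpha) / np)) with (INR k + alpha) in Ht1 by (field; lra). exact Ht1. }
      assert (Hnt2 : np * t < INR k + alpha + 1).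
      { apply Rmult_lt_compat_l with (r := np) in Ht2; [|lra].
        replace (np * ((INR k + alpha + 1) / np)) with (INR k + alpha + 1) in Ht2 by (field; lra). exact Ht2. }
      eapply Rle_trans. apply (PW f np x t Hf Hnp Hx Ht0).
      fold d. fold Om.
      replace (4 * (1 + x ^ 2) * Om * (2 + np * (t - x) ^ 2) * (1 + (t - x) ^ 2))
        with (pref * ((2 + np * (t - x) ^ 2) * (1 + (t - x) ^ 2))) by (unfold pref; ring).
      apply Rmult_le_compat_l; auto.
      assert (HkI : INR k = INR i + INR (k - i)) by (rewrite <- plus_INR; f_equal; lia).
      assert (Hbx : 0 <= beta * x) by nra.
      pose proof (alg np (t - x) (INR i - INR n * x) (INR (k - i)) (np * t - INR k - beta * x) G Hnp) as HA.
      unfold P0, Af, Bf. apply HA.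
      + unfold np. rewrite HkI. ring.
      + apply Rabs_le. unfold G. split; lra. }
  set (V := fun k => sum_f_R0 (fun i => wN n x i * wP lam (k - i) * (P0 + Af i + Bf (k - i)%nat)) k).
  assert (Key2 : forall k, Rabs (W n k a x * Rk k) <= pref * V k).
  { intro k. rewrite W_conv by auto. fold lam.
    rewrite Rmult_comm, scal_sum.
    eapply Rle_trans; [apply Rsum_abs|].
    unfold V. rewrite scal_sum. apply sum_Rle. intros i Hi.
    assert (Hw : 0 <= wN n x i * wP lam (k - i)).
    { apply Rmult_le_pos. apply wN_nonneg; auto. apply wP_nonneg; lra. }
    rewrite Rabs_mult, (Rabs_pos_eq _ Hw).
    specialize (Key1 k i Hi).
    replace (wN n x i * wP lam (k - i) * (P0 + Af i + Bf (k - i)%nat) * pref)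
      with (wN n x i * wP lam (k - i) * (pref * (P0 + Af i + Bf (k - i)%nat))) by ring.
    apply Rmult_le_compat_l; auto. }
  set (EA := 9 / np * (INR n * x * (1 + x)) + 27 / np ^ 3 * mu4 (INR n) x).
  set (EB := 9 / np * (lam ^ 2 + lam) + 27 / np ^ 3 * (lam ^ 4 + 6 * lam ^ 3 + 7 * lam ^ 2 + lam)).
  assert (Key3 : is_series V (P0 + EA + EB)).
  { destruct (cmomN x n Hx Hn) as [N2 N4].
    destruct (cmomP lam) as [P2 P4].
    apply (conv_sep (wN n x) (wP lam) Af Bf P0 EA EB).
    - intro; apply wN_nonneg; auto.
    - intro; apply wP_nonneg; lra.
    - intro i. unfold Af. assert (0 < np ^ 3) by (apply pow_lt; lra).
      pose proof (pow2_ge_0 (INR i - INR n * x)).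
      assert (0 <= (INR i - INR n * x) ^ 4) by (replace 4%nat with (2 * 2)%nat by reflexivity; rewrite pow_mult; apply pow2_ge_0).
      apply Rplus_le_le_0_compat; apply Rdiv_le_0_compat; lra.
    - intro j. unfold Bf. assert (0 < np ^ 3) by (apply pow_lt; lra).
      pose proof (pow_le (INR j) 2 (pos_INR j)). pose proof (pow_le (INR j) 4 (pos_INR j)).
      apply Rplus_le_le_0_compat; apply Rdiv_le_0_compat; lra.
    - apply wN_sum; auto.
    - apply wP_sum.
    - eapply isR_ext; [| exact (isR_plus _ _ _ _ (isR_scal (9 / np) _ _ N2) (isR_scal (27 / np ^ 3) _ _ N4))].
      intro i. cbv beta. unfold Af. unfold Rdiv. ring.
    - eapply isR_ext; [| exact (isR_plus _ _ _ _ (isR_scal (9 / np) _ _ P2) (isR_scal (27 / np ^ 3) _ _ P4))].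
      intro i. cbv beta. unfold Bf. unfold Rdiv. ring. }
  assert (HVser : is_series (fun k => pref * V k) (pref * (P0 + EA + EB))) by (apply isR_scal; auto).
  assert (HexV : ex_series (fun k => pref * V k)) by (eexists; exact HVser).
  assert (Hex : ex_series (fun k => W n k a x * Rk k)).
  { apply (@ex_series_le R_AbsRing R_CompleteNormedModule _ (fun k => pref * V k)); auto. }
  assert (Hexa : ex_series (fun k => Rabs (W n k a x * Rk k))).
  { apply (@ex_series_le R_AbsRing R_CompleteNormedModule _ (fun k => pref * V k)); auto.
    intro k. change (Rabs (Rabs (W n k a x * Rk k)) <= pref * V k). rewrite Rabs_Rabsolu. auto. }
  set (S := Series (fun k => W n k a x * Rk k)).
  assert (HS : Rabs S <= pref * (P0 + EA + EB)).
  { eapply Rle_trans. apply Series_Rabs; auto.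
    rewrite <- (is_series_unique _ _ HVser).
    apply Series_le; auto. intro k; split; [apply Rabs_pos | auto]. }
  assert (Hphi : is_series (fun k => W n k a x * Rint f (lo k) (hi k)) ((S + f x) / np)).
  { pose proof (isR_scal (/ np) _ _ (isR_plus _ _ _ _ (Series_correct _ Hex) (isR_scal (f x) _ _ (W_sum n a x Hx ha Hn)))) as K.
    eapply isR_l; [| eapply isR_ext; [| exact K]].
    - fold S. field. lra.
    - intro k. cbv beta. unfold Rk. field. lra. }
  assert (HT : T n a alpha beta f x = S + f x).
  { unfold T. fold np. rewrite (series_sum_spec _ ((S + f x) / np)).
    field. lra. apply is_series_Reals. exact Hphi. }
  rewrite HT. replace (S + f x - f x) with S by ring.
  pose proof (bracket (INR n) x np lam a alpha beta ltac:(unfold np; lra) Hx halpha Hbe Hlam) as HB.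
  fold G in HB. fold P0 in HB. fold EA EB in HB.
  assert (HX : 0 < (1 + x ^ 2) ^ 3) by (apply pow_lt; pose proof (pow2_ge_0 x); lra).
  apply Rmult_le_reg_r with ((1 + x ^ 2) ^ 3); auto.
  unfold Rdiv. rewrite Rmult_assoc, Rinv_l, Rmult_1_r by lra.
  eapply Rle_trans; [exact HS|].
  fold d Om.
  replace (4 * K0 a alpha beta * Om * (1 + x ^ 2) ^ 3) with (pref * (K0 a alpha beta * (1 + x ^ 2) ^ 2)) by (unfold pref; ring).
  apply Rmult_le_compat_l; auto.
Qed.
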